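(* Let $K\subseteq\mathbb{R}^{n}$ be compact, $T\subseteq\mathbb{R}^{n}$ compact with non-empty interior, $\delta>0$, and let $\Lambda(\delta)\subseteq\mathbb{R}^{n}$ be a finite $\delta$-net for $K+T$. Then \[ M_{\omega}(K,T)\ge M_{\omega}(K,T+\delta B_{2}^{n},\Lambda(\delta)). \]
   Context: $B_2^n$ is the closed Euclidean unit ball; a set $\Lambda$ is a $\delta$-net for $A$ if $A\subseteq\Lambda+\delta B_2^n$. $\mathbbm{1}_A$ is the indicator of $A$. $M_\omega(K,T)$ is the supremum of $\sum_i\omega_i$ over finite families $\{(x_i,\omega_i)\}$ with $x_i\in K$, $\omega_i\ge0$, such that $\sum_i\omega_i\mathbbm{1}_T(x-x_i)\le1$ for all $x\in\mathbb{R}^n$. For a finite set $\Lambda\subseteq\mathbb{R}^n$ and a set $S$, $M_\omega(K,S,\Lambda)$ is the supremum of $\sum_i\omega_i$ over finite families $\{(x_i,\omega_i)\}$ with $x_i\in\Lambda\cap K$, $\omega_i\ge0$, such that $\sum_i\omega_i\mathbbm{1}_S(x-x_i)\le1$ for all $x\in\Lambda$. *)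

(* Defs.v *)
From HB Require Import structures.
From mathcomp Require Import all_boot all_order all_algebra.
From mathcomp Require Import all_classical all_reals all_analysis.
Set Implicit Arguments. Unset Strict Implicit. Unset Printing Implicit Defensive.
Import Order.TTheory GRing.Theory Num.Theory.
Import numFieldNormedType.Exports.
Local Open Scope classical_set_scope.
Local Open Scope ring_scope.

Section Defs.
Variables (R : realType) (n : nat).
Local Notation V := 'rV[R]_n.

Definition eucl_norm (x : V) : R := Num.sqrt (\sum_(i < n) x ord0 i ^+ 2).

Definition ball2 : set V := [set x | eucl_norm x <= 1].

Definition mink_sum (A B : set V) : set V := [set a + b | a in A & b in B].
Definition dilate (r : R) (A : set V) : set V := [set r *: a | a in A].

Definition is_delta_net (Lam : set V) (d : R) (A : set V) : Prop :=
  A `<=` mink_sum Lam (dilate d ball2).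

Definition M_omega (K T : set V) : \bar R :=
  ereal_sup [set r : \bar R | exists (m : nat) (x : 'I_m -> V) (w : 'I_m -> R),
     [/\ forall i, K (x i), forall i, 0 <= w i,
         forall y : V, \sum_(i < m) w i * \1_T (y - x i) <= 1
       & r = (\sum_(i < m) w i)%:E]].

Definition M_omega_net (K S Lam : set V) : \bar R :=
  ereal_sup [set r : \bar R | exists (m : nat) (x : 'I_m -> V) (w : 'I_m -> R),
     [/\ forall i, (Lam `&` K) (x i), forall i, 0 <= w i,
         forall y : V, Lam y -> \sum_(i < m) w i * \1_S (y - x i) <= 1
       & r = (\sum_(i < m) w i)%:E]].

End Defs.

Arguments ball2 {R n}.

(* Main.v *)
Require Import Defs.
From HB Require Import structures.
From mathcomp Require Import all_boot all_order all_algebra.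
From mathcomp Require Import all_classical all_reals all_analysis.
Import Order.TTheory GRing.Theory Num.Theory.
Import numFieldNormedType.Exports.
Local Open Scope classical_set_scope.
Local Open Scope ring_scope.

Theorem lemma2p3 (R : realType) (n : nat) (K T : set 'rV[R]_n) (d : R)
  (Lam : set 'rV[R]_n) :
  compact K -> compact T -> T° !=set0 -> 0 < d ->
  finite_set Lam -> is_delta_net Lam d (mink_sum K T) ->
  (M_omega_net K (mink_sum T (dilate d (@ball2 R n))) Lam <= M_omega K T)%E.
Proof.
move=> _ _ _ d0 _ net.
apply: le_ereal_sup => r [m [x [w [hx hw hs ->]]]].
exists m, x, w; split => // [i|z]; first by case: (hx i).
case: (pselect (exists j, T (z - x j))) => [[j hj]|nj]; last first.
  rewrite big1 // => i _; rewrite indicE memNset ?mulr0 // => h.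
  by apply: nj; exists i.
have : mink_sum K T z.
  exists (x j); first by case: (hx j).
  by exists (z - x j) => //; rewrite addrC subrK.
move/net => [l hl [e [b hb <-] hz]].
apply: le_trans (hs l hl); apply: ler_sum => i _. apply: (ler_wpM2l (hw i)).
rewrite !indicE; case: (boolP (z - x i \in T)) => [hT|]; last first.
  by move=> _; case: (_ \in _).
rewrite mem_set //; exists (z - x i); first by rewrite inE in hT.
exists (d *: (- b)).
  exists (- b) => //; rewrite /ball2 /= /eucl_norm.
  by under eq_bigr do rewrite mxE sqrrN.
rewrite -hz scalerN.
by rewrite addrAC addrK.
Qed.
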